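(* Let $\mathcal{F}\subseteq\Sigma^*$ be a finite family of strings, $k\ge0$ an integer, and $(N(F))_{F\in\mathcal{F}}$ a $k$-complete family. Then for all $F_1,F_2\in\mathcal{F}$ and all integers $0\le d\le k$, $$\mathsf{LCP}_d(F_1,F_2)=\max_{\substack{d_1+d_2=d\\ F_i'\in N_{d,d_i}(F_i)}}\mathsf{LCP}(F_1',F_2')=\max_{\substack{\lfloor d_1+d_2\rfloor\le d\\ F_i'\in N_{k,d_i}(F_i)}}\mathsf{LCP}(F_1',F_2'),$$ where in the first maximum $d_1,d_2$ range over half-integers in $[0,d]$ and in the second over half-integers in $[0,k]$.
   Context: Let $\$\notin\Sigma$ and $\Sigma_\$=\Sigma\cup\{\$\}$. $d_H$ is the Hamming distance of equal-length strings, $\mathsf{LCP}$ the longest common prefix length, $\mathsf{LCP}_d(U,V)=\max\{p\le\min(|U|,|V|): d_H(U[1..p],V[1..p])\le d\}$, and $\#_\$(W)$ the number of occurrences of $\$$ in $W$. For $U,V\in\Sigma^*$ and $d\ge0$, strings $U',V'\in\Sigma_\$^*$ form a $(U,V)_d$-pair if $|U'|=|U|$, $|V'|=|V|$, and for each position $i$: if $i>\mathsf{LCP}_d(U,V)$ or $U[i]=V[i]$ then $U'[i]=U[i]$ and $V'[i]=V[i]$; otherwise $U'[i]=V'[i]\in\{U[i],V[i],\$\}$. Sets $N(F)\subseteq\Sigma_\$^*$ ($F\in\mathcal{F}$) form a $k$-complete family if for all $U,V\in\mathcal{F}$ and $0\le d\le k$ there is a $(U,V)_d$-pair $(U',V')$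 with $U'\in N(U)$, $V'\in N(V)$. For $F\in\mathcal{F}$ and integer $d\ge 0$, $N_d(F)=\{F'\in N(F): |F'|=|F|,\ d_H(F,F')\le d\}$, and for a half-integer $0\le d'\le d$, $N_{d,d'}(F)=\{F'\in N_d(F): d_H(F,F')-\tfrac12\#_\$(F')\le d'\}$. A half-integer is an element of $\tfrac12\mathbb{Z}$. *)

(* Defs.v *)
(* Alphabet Sigma is an arbitrary eqType T; Sigma_$ is
   option T with None playing the role of the fresh symbol $. *)
From mathcomp Require Import all_boot.
Set Implicit Arguments. Unset Strict Implicit. Unset Printing Implicit Defensive.

Definition hamming (A : eqType) (u v : seq A) : nat :=
  count (fun p => p.1 != p.2) (zip u v).

Fixpoint lcp (A : eqType) (u v : seq A) : nat :=
  match u, v with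
  | x :: u', y :: v' => if x == y then (lcp u' v').+1 else 0
  | _, _ => 0
  end.

Definition lcp_d (A : eqType) (d : nat) (U V : seq A) : nat :=
  \max_(p < (minn (size U) (size V)).+1 | hamming (take p U) (take p V) <= d) p.

Definition ndollar (T : eqType) (W : seq (option T)) : nat := count_mem None W.

(* (U,V)_d-pair; positions are 0-based here, so the paper's position i+1 > LCP_d
   becomes LCP_d <= i. *)
Definition pair_d (T : eqType) (d : nat) (U V : seq T) (U' V' : seq (option T)) : Prop :=
  let L := lcp_d d U V in
  let Us := map Some U in let Vs := map Some V in
  [/\ size U' = size U, size V' = size V,
      (forall i, (L <= i \/ nth None Us i = nth None Vs i) ->
         (i < size U -> nth None U' i = nth None Us i) /\
         (i < size V -> nth None V' i = nth None Vs i)) &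
      (forall i, i < L -> nth None Us i <> nth None Vs i ->
         nth None U' i = nth None V' i /\
         nth None U' i \in [:: nth None Us i; nth None Vs i; None])].

Definition k_complete (T : eqType) (Fam : seq (seq T))
    (N : seq T -> seq (option T) -> Prop) (k : nat) : Prop :=
  forall U V, U \in Fam -> V \in Fam -> forall d, d <= k ->
    exists U' V', [/\ pair_d d U V U' V', N U U' & N V V'].

Definition N_d (T : eqType) (N : seq T -> seq (option T) -> Prop) (d : nat)
    (F : seq T) (F' : seq (option T)) : Prop :=
  [/\ N F F', size F' = size F & hamming (map Some F) F' <= d].

(* N_{d,d'}(F) with the half-integer d' = h/2 (h : nat, h <= 2d):
   d_H(F,F') - #$(F')/2 <= h/2  <=>  2 d_H(F,F') <= h + #$(F') *)
Definition N_dh (T : eqType) (N : seq T -> seq (option T) -> Prop) (d h : nat)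
    (F : seq T) (F' : seq (option T)) : Prop :=
  [/\ h <= d.*2, N_d N d F F' & (hamming (map Some F) F').*2 <= h + ndollar F'].

(* candidate values of the first maximum: d1 = h1/2, d2 = h2/2 in [0,d], d1+d2 = d *)
Definition cand1 (T : eqType) (N : seq T -> seq (option T) -> Prop) (d : nat)
    (F1 F2 : seq T) (n : nat) : Prop :=
  exists h1 h2 F1' F2',
    [/\ h1 <= d.*2, h2 <= d.*2, h1 + h2 = d.*2 &
        [/\ N_dh N d h1 F1 F1', N_dh N d h2 F2 F2' & lcp F1' F2' = n]].

(* candidate values of the second maximum: d1 = h1/2, d2 = h2/2 in [0,k],
   floor(d1+d2) <= d *)
Definition cand2 (T : eqType) (N : seq T -> seq (option T) -> Prop) (k d : nat)
    (F1 F2 : seq T) (n : nat) : Prop :=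
  exists h1 h2 F1' F2',
    [/\ h1 <= k.*2, h2 <= k.*2, (h1 + h2)./2 <= d &
        [/\ N_dh N k h1 F1 F1', N_dh N k h2 F2 F2' & lcp F1' F2' = n]].

Definition is_max (P : nat -> Prop) (m : nat) : Prop :=
  P m /\ forall n, P n -> n <= m.

(* Main.v *)
Require Import Defs.
From mathcomp Require Import all_boot zify.
Set Implicit Arguments. Unset Strict Implicit. Unset Printing Implicit Defensive.

Section H.
Variable T : eqType.

Lemma ham_cons (A : eqType) (x y : A) u v :
  hamming (x :: u) (y :: v) = (x != y) + hamming u v.
Proof. by []. Qed.

Lemma ham_refl (A : eqType) (u : seq A) : hamming u u = 0.
Proof. by elim: u => //= x u IH; rewrite ham_cons eqxx IH. Qed.

Lemma nd_cons (a : option T) u : ndollar (a :: u) = (a == None) + ndollar u.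
Proof. by []. Qed.

Lemma nd_le_ham (u : seq T) u' : size u' = size u ->
  ndollar u' <= hamming (map Some u) u'.
Proof.
elim: u u' => [|x u IH] [|a u'] // [Hs].
rewrite nd_cons ham_cons; move: (IH _ Hs); set H := hamming _ u'.
case: a => [z|] /=; lia.
Qed.

Lemma lcp_le (A : eqType) (u v : seq A) : lcp u v <= minn (size u) (size v).
Proof.
elim: u v => [|x u IH] [|y v] //=; case: eqP => // _.
have := IH v; lia.
Qed.

Lemma ham_take_succ (u v : seq T) n : n < size u -> n < size v ->
  hamming (take n.+1 u) (take n.+1 v) =
  hamming (take n u) (take n v) + (nth None (map Some u) n != nth None (map Some v) n).
Proof.
elim: u v n => [|x u IH] [|y v] [|n] // H1 H2.
  by rewrite /= !take0 ham_cons (inj_eq (@Some_inj _)) /hamming /= addn0.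
by rewrite /= !ham_cons IH // addnA.

Qed.

Lemma head_ineq (x y : T) (a : option T) :
  (x != y) + (a == None) <= (Some x != a) + (Some y != a).
Proof.
case: a => [z|]; rewrite ?(inj_eq (@Some_inj _)) /=; last by case: (x != y).
rewrite addn0; do 3 (case: eqP => /= ?); subst => //; congruence.
Qed.

Lemma P2z (u v : seq T) u' v' : size u' = size u -> size v' = size v ->
  lcp u' v' = 0 ->
  (hamming (take (lcp u' v') u) (take (lcp u' v') v)).*2 + ndollar u' + ndollar v'
   <= (hamming (map Some u) u').*2 + (hamming (map Some v) v').*2.
Proof.
move=> Hs1 Hs2 ->; rewrite !take0.
have := nd_le_ham Hs1; have := nd_le_ham Hs2; rewrite /hamming /=; lia.
Qed.

Lemma P2 (u v : seq T) u' v' : size u' = size u -> size v' = size v ->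
  (hamming (take (lcp u' v') u) (take (lcp u' v') v)).*2 + ndollar u' + ndollar v'
   <= (hamming (map Some u) u').*2 + (hamming (map Some v) v').*2.
Proof.
elim: u v u' v' => [|x u IH] [|y v] [|a u'] [|b v'] Hs1 Hs2;
  try (by apply: P2z); try discriminate.
case: (a =P b) => [Hab|Hab]; last by apply: P2z => //=; case: eqP.
subst b; move: Hs1 Hs2 => [Hs1] [Hs2].
have -> : lcp (a :: u') (a :: v') = (lcp u' v').+1 by rewrite /= eqxx.
rewrite !take_cons !map_cons !ham_cons !nd_cons.
have := IH v u' v' Hs1 Hs2; have := head_ineq x y a; lia.
Qed.

Lemma lcpd_ub d (U V : seq T) p : p <= minn (size U) (size V) ->
  hamming (take p U) (take p V) <= d -> p <= lcp_d d U V.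
Proof.
move=> Hp Hh; rewrite /lcp_d; have Hp' : p < (minn (size U) (size V)).+1 by [].
exact: (@leq_bigmax_cond _ _ (fun i : 'I_(minn (size U) (size V)).+1 => nat_of_ord i) (Ordinal Hp')).
Qed.

Lemma lcpd_props d (U V : seq T) :
  lcp_d d U V <= minn (size U) (size V) /\
  hamming (take (lcp_d d U V) U) (take (lcp_d d U V) V) <= d.
Proof.
rewrite /lcp_d.
set A := [pred p : 'I_(minn (size U) (size V)).+1 | hamming (take p U) (take p V) <= d].
have Hc : 0 < #|A| by apply/card_gt0P; exists ord0; rewrite inE /= !take0.
have [i Hi ->] := @eq_bigmax_cond _ A (fun i => nat_of_ord i) Hc.
split; first by rewrite -ltnS; apply: ltn_ord.
by move: Hi; rewrite inE.
Qed.

Lemma lcpd_stop d (U V : seq T) : let L := lcp_d d U V in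
  L < size U -> L < size V -> nth None (map Some U) L != nth None (map Some V) L.
Proof.
move=> L H1 H2; apply/negP => /eqP He.
have [_ Hh] := lcpd_props d U V.
have : L.+1 <= L.
  apply: lcpd_ub; first by rewrite leq_min H1 H2.
  by rewrite ham_take_succ // He eqxx addn0.
by rewrite ltnn.
Qed.

Lemma P1 L : forall (u v : seq T) (u' v' : seq (option T)),
  L <= size u -> L <= size v -> size u' = size u -> size v' = size v ->
  (L < size u -> L < size v -> nth None (map Some u) L != nth None (map Some v) L) ->
  (forall i, (L <= i \/ nth None (map Some u) i = nth None (map Some v) i) ->
     (i < size u -> nth None u' i = nth None (map Some u) i) /\
     (i < size v -> nth None v' i = nth None (map Some v) i)) ->
  (forall i, i < L -> nth None (map Some u) i <> nth None (map Some v) i ->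
     nth None u' i = nth None v' i /\
     nth None u' i \in [:: nth None (map Some u) i; nth None (map Some v) i; None]) ->
  [/\ hamming (map Some u) u' <= hamming (take L u) (take L v),
      hamming (map Some v) v' <= hamming (take L u) (take L v),
      (hamming (map Some u) u').*2 + (hamming (map Some v) v').*2 <=
        (hamming (take L u) (take L v)).*2 + ndollar u' + ndollar v'
    & lcp u' v' = L].
Proof.
elim: L => [|L IH] u v u' v' HL1 HL2 Hs1 Hs2 Hst H3 H4.
  have E1 : u' = map Some u.
    apply: (@eq_from_nth _ None); first by rewrite size_map.
    by move=> i Hi; case: (H3 i (or_introl (leq0n i))); rewrite Hs1 in Hi; auto.
  have E2 : v' = map Some v.
    apply: (@eq_from_nth _ None); first by rewrite size_map.
    by move=> i Hi; case: (H3 i (or_introl (leq0n i))); rewrite Hs2 in Hi; auto.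
  subst u' v'; rewrite !take0 !ham_refl /=; split => //.
  case: u v Hst {HL1 HL2 Hs1 Hs2 H3 H4} => [|x u] [|y v] //= Hst.
  by rewrite (negbTE (Hst isT isT)).
case: u v u' v' HL1 HL2 Hs1 Hs2 Hst H3 H4 => [|x u] [|y v] [|a u'] [|b v'] // HL1 HL2 [Hs1] [Hs2] Hst H3 H4.
have [] := IH u v u' v' HL1 HL2 Hs1 Hs2 Hst.
- by move=> i Hi; apply: (H3 i.+1).
- by move=> i Hi; apply: (H4 i.+1).
move=> I1 I2 I3 I4.
rewrite !map_cons !take_cons !ham_cons !nd_cons.
have [Exy|Nxy] := eqVneq x y.
  subst y; case: (H3 0 (or_intror erefl)) => /(_ isT) Ea /(_ isT) Eb.
  move: Ea Eb => /= -> ->; rewrite /= !eqxx /= I4; split => //; lia.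
have Hne : Some x <> Some y by move=> [E]; rewrite E eqxx in Nxy.
case: (H4 0 isT Hne) => /= Eab Hin.
subst b; rewrite eqxx I4; split => //.
- by move: I1; case: (Some x != a) => /=; lia.
- by move: I2; case: (Some y != a) => /=; lia.
move: Hin; rewrite !inE => /or3P [] /eqP ->; rewrite ?eqxx /=; lia.
Qed.
End H.

Lemma upper (T : eqType) (N : seq T -> seq (option T) -> Prop) K d (F1 F2 : seq T)
  g1 g2 F1' F2' :
  N_dh N K g1 F1 F1' -> N_dh N K g2 F2 F2' -> g1 + g2 <= d.*2 + 1 ->
  lcp F1' F2' <= lcp_d d F1 F2.
Proof.
move=> [_ [_ Sf1 _] Hf1] [_ [_ Sf2 _] Hf2] Hs.
have P := P2 Sf1 Sf2.
apply: lcpd_ub; first by have := lcp_le F1' F2'; rewrite Sf1 Sf2.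
lia.
Qed.

Theorem lemma9 (T : eqType) (Fam : seq (seq T)) (k : nat)
    (N : seq T -> seq (option T) -> Prop) :
  k_complete Fam N k ->
  forall F1 F2, F1 \in Fam -> F2 \in Fam ->
  forall d, d <= k ->
    is_max (cand1 N d F1 F2) (lcp_d d F1 F2) /\
    is_max (cand2 N k d F1 F2) (lcp_d d F1 F2).
Proof.
move=> Hk F1 F2 H1 H2 d Hd.
have [U' [V' [[s1 s2 h3 h4] N1 N2]]] := Hk F1 F2 H1 H2 d Hd.
have [HLm HLh] := lcpd_props d F1 F2.
have HL1 : lcp_d d F1 F2 <= size F1 by apply: leq_trans HLm (geq_minl _ _).
have HL2 : lcp_d d F1 F2 <= size F2 by apply: leq_trans HLm (geq_minr _ _).
have [I1 I2 I3 I4] := P1 HL1 HL2 s1 s2 (@lcpd_stop _ d F1 F2) h3 h4.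
have nd1 := nd_le_ham s1; have nd2 := nd_le_ham s2.
set h1 := (hamming (map Some F1) U').*2 - ndollar U'.
have W : forall K, d <= K -> N_dh N K h1 F1 U' /\ N_dh N K (d.*2 - h1) F2 V'.
  move=> K HK; split; split; try split => //; rewrite /h1; lia.
split; split.
- exists h1, (d.*2 - h1), U', V'; have [W1 W2] := W d (leqnn d).
  split => //; rewrite /h1; lia.
- move=> n [g1 [g2 [F1' [F2' [Hg1 Hg2 Hsum [Hn1 Hn2 <-]]]]]].
  apply: upper Hn1 Hn2 _; lia.
- exists h1, (d.*2 - h1), U', V'; have [W1 W2] := W k Hd.
  split => //; rewrite /h1 -?divn2; lia.
- move=> n [g1 [g2 [F1' [F2' [Hg1 Hg2 Hsum [Hn1 Hn2 <-]]]]]].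
  apply: upper Hn1 Hn2 _; move: Hsum; rewrite -divn2; lia.
Qed.
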